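(* For real numbers $t_1,t_2,t_3$, let $$\rho^{(1)}_{AB}=\tfrac19\,\mathbb{1}_3\otimes\mathbb{1}_3+\tfrac14\big(t_1\,\lambda_1\otimes\lambda_1+t_2\,\lambda_2\otimes\lambda_2+t_3\,\lambda_3\otimes\lambda_3\big),$$ and assume $\rho^{(1)}_{AB}$ is positive semidefinite (a quantum state). Then $\rho^{(1)}_{AB}$ is separable if and only if $|t_1|+|t_2|+|t_3|\le\frac49$. Moreover, when $|t_1|+|t_2|+|t_3|\le\frac49$, a separable decomposition is obtained as follows. Choose real $\alpha_\mu,\beta_\mu$ with $\alpha_\mu\beta_\mu=t_\mu$ and $\sum_\mu\alpha_\mu^2\le\frac49$, $\sum_\mu\beta_\mu^2\le\frac49$. With the sign patterns $$\vec\epsilon^{(1)}=(1,-1,-1),\quad\vec\epsilon^{(2)}=(-1,-1,1),\quad\vec\epsilon^{(3)}=(-1,1,-1),\quad\vec\epsilon^{(4)}=(1,1,1),$$ one has $$\rho^{(1)}_{AB}=\sum_{i=1}^4\tfrac14\Big(\tfrac13\mathbb{1}+\tfrac12\sum_{\mu=1}^3\epsilon^{(i)}_\mu\alpha_\mu\lambda_\mu\Big)\otimes\Big(\tfrac13\mathbb{1}+\tfrac12\sum_{\mu=1}^3\epsilon^{(i)}_\mu\beta_\mu\lambda_\mu\Big),$$ where each factor is a density matrix.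
   Context: With $\{|1\rangle,|2\rangle,|3\rangle\}$ the standard basis of $\mathbb{C}^3$, the Gell-Mann matrices used here are: - $\lambda_1=|1\rangle\langle2|+|2\rangle\langle1|$, - $\lambda_2=-i|1\rangle\langle2|+i|2\rangle\langle1|$, - $\lambda_3=|1\rangle\langle1|-|2\rangle\langle2|$. A state is separable if it is a convex combination of tensor products of density matrices. *)

(* Defs.v *)
From HB Require Import structures.
From mathcomp Require Import all_boot all_order all_algebra.
Set Implicit Arguments. Unset Strict Implicit. Unset Printing Implicit Defensive.
Import Order.TTheory GRing.Theory Num.Theory.
Local Open Scope ring_scope.

(* Row/column index k of C^m (x) C^n is split as (k %/ n, k %% n): standard
   (row-major) Kronecker convention |i>|j> <-> index i*n + j. *)
Lemma kidx1_proof m n (k : 'I_(m * n)) : (k %/ n < m)%N.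
Proof.
case: n k => [|n] k; first by case: k => k /=; rewrite muln0 ltn0.
by rewrite ltn_divLR // mulnC.
Qed.

Lemma kidx2_proof m n (k : 'I_(m * n)) : (k %% n < n)%N.
Proof.
case: n k => [|n] k; first by case: k => k /=; rewrite muln0 ltn0.
by rewrite ltn_mod.
Qed.

Definition kidx1 m n (k : 'I_(m * n)) : 'I_m := Ordinal (kidx1_proof k).
Definition kidx2 m n (k : 'I_(m * n)) : 'I_n := Ordinal (kidx2_proof k).

Definition kron (R : pzRingType) m1 n1 m2 n2
  (A : 'M[R]_(m1, n1)) (B : 'M[R]_(m2, n2)) : 'M[R]_(m1 * m2, n1 * n2) :=
  \matrix_(i, j) (A (kidx1 i) (kidx1 j) * B (kidx2 i) (kidx2 j)).

Section Quantum.
Variable C : numClosedFieldType.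

Definition adjmx m n (A : 'M[C]_(m, n)) : 'M[C]_(n, m) :=
  \matrix_(i, j) (A j i)^*.

Definition psdmx n (A : 'M[C]_n) : Prop :=
  adjmx A = A /\ forall x : 'cV[C]_n, 0 <= (adjmx x *m A *m x) 0 0.

Definition density n (A : 'M[C]_n) : Prop := psdmx A /\ \tr A = 1.

Definition separable m n (rho : 'M[C]_(m * n)) : Prop :=
  exists (k : nat) (p : 'I_k -> C) (A : 'I_k -> 'M[C]_m) (B : 'I_k -> 'M[C]_n),
    (forall i, 0 <= p i) /\ \sum_(i < k) p i = 1 /\
    (forall i, density (A i) /\ density (B i)) /\
    rho = \sum_(i < k) p i *: kron (A i) (B i).

(* Gell-Mann matrices lambda_1, lambda_2, lambda_3 (indices 0,1,2);
   basis |1>,|2>,|3> are indices 0,1,2. *)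
Definition gellmann (mu : 'I_3) : 'M[C]_3 :=
  match val mu with
  | 0%N => delta_mx 0 1 + delta_mx 1 0
  | 1%N => (- 'i) *: delta_mx 0 1 + 'i *: delta_mx 1 0
  | _ => delta_mx 0 0 - delta_mx 1 1
  end.

Definition rho1 (t : 'I_3 -> C) : 'M[C]_(3 * 3) :=
  (9%:R)^-1 *: kron (1%:M : 'M[C]_3) (1%:M : 'M[C]_3)
  + (4%:R)^-1 *: \sum_(mu < 3) t mu *: kron (gellmann mu) (gellmann mu).

(* sign patterns eps^(1..4) (indices 0..3) *)
Definition eps (i : 'I_4) (mu : 'I_3) : C :=
  match val i, val mu with
  | 0%N, 0%N => 1 | 0%N, _ => -1
  | 1%N, 2%N => 1 | 1%N, _ => -1
  | 2%N, 1%N => 1 | 2%N, _ => -1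
  | _, _ => 1
  end.

Definition factor (a : 'I_3 -> C) (i : 'I_4) : 'M[C]_3 :=
  (3%:R)^-1 *: 1%:M + (2%:R)^-1 *: \sum_(mu < 3) (eps i mu * a mu) *: gellmann mu.

End Quantum.

(* Main.v *)
Require Import Defs.
From HB Require Import structures.
From mathcomp Require Import all_boot all_order all_algebra.
From mathcomp Require Import ring.
Import Order.TTheory GRing.Theory Num.Theory.
Local Open Scope ring_scope.

Lemma kronE (R : pzRingType) m1 n1 m2 n2 (A : 'M[R]_(m1, n1)) (B : 'M[R]_(m2, n2)) i j :
  kron A B i j = A (kidx1 i) (kidx1 j) * B (kidx2 i) (kidx2 j).
Proof. by rewrite mxE. Qed.

Definition o0 : 'I_3 := @Ordinal 3 0 isT.
Definition o1 : 'I_3 := @Ordinal 3 1 isT.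
Definition o2 : 'I_3 := @Ordinal 3 2 isT.

Lemma sum3 (V : nmodType) (F : 'I_3 -> V) : \sum_(i < 3) F i = F o0 + F o1 + F o2.
Proof.
rewrite !big_ord_recr big_ord0 /= add0r.
by congr (F _ + F _ + F _); apply: val_inj.
Qed.

Lemma sum4 (V : nmodType) (F : 'I_4 -> V) : \sum_(i < 4) F i =
  F (@Ordinal 4 0 isT) + F (@Ordinal 4 1 isT) + F (@Ordinal 4 2 isT) + F (@Ordinal 4 3 isT).
Proof.
rewrite !big_ord_recr big_ord0 /= add0r.
by congr (F _ + F _ + F _ + F _); apply: val_inj.
Qed.

Lemma factorE (C : numClosedFieldType) (a : 'I_3 -> C) i p q :
  factor a i p q = 3%:R^-1 * (p == q)%:R + 2%:R^-1 *
    (eps C i o0 * a o0 * gellmann C o0 p q + eps C i o1 * a o1 * gellmann C o1 p q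
     + eps C i o2 * a o2 * gellmann C o2 p q).
Proof.
rewrite !mxE summxE sum3 !mxE //.
Qed.

Lemma decomp_entry (C : numClosedFieldType) (alpha beta : 'I_3 -> C) (p q r s : 'I_3) :
  (9%:R)^-1 * ((p == q)%:R * (r == s)%:R)
  + (4%:R)^-1 * \sum_(mu < 3) (alpha mu * beta mu) * (gellmann C mu p q * gellmann C mu r s)
  = \sum_(i < 4) (4%:R)^-1 * (factor alpha i p q * factor beta i r s).
Proof.
rewrite sum4 !factorE sum3 /=.
move: (gellmann C) => G.
rewrite /eps /=.
by field.
Qed.

Lemma decomp (C : numClosedFieldType) (t alpha beta : 'I_3 -> C) :
  (forall mu, alpha mu * beta mu = t mu) ->
  rho1 t = \sum_(i < 4) (4%:R)^-1 *: kron (factor alpha i) (factor beta i).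
Proof.
move=> hab; apply/matrixP => i j.
rewrite [RHS]summxE; under [RHS]eq_bigr do rewrite mxE kronE.
rewrite -decomp_entry.
rewrite !mxE summxE; under eq_bigr do rewrite !mxE -hab.
done.
Qed.

Lemma sq_le (C : numDomainType) (x d : C) : x \is Num.real -> 0 <= d ->
  x ^+ 2 <= d ^+ 2 -> - d <= x <= d.
Proof.
move=> xr d0 h; rewrite -real_ler_norml //.
by rewrite -(ler_pXn2r (n:=2)) ?nnegrE ?normr_ge0 // real_normK.
Qed.

Lemma form2_ge0 (C : numClosedFieldType) (p s q q' u v : C) :
  0 <= p -> 0 <= s -> q' = q^* -> q * q' <= p * s ->
  0 <= p * (u^* * u) + s * (v^* * v) + u^* * q * v + v^* * q' * u.
Proof.
move=> p0 s0 -> hq.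
have hd : 0 <= p * s - q * q^* by rewrite subr_ge0.
have pr : p^* = p by apply: conj_Creal; apply: ger0_real.
move: p0; rewrite le0r => /orP [/eqP p0 | pp].
  subst p; rewrite mul0r in hq.
  have : q * q^* == 0 by rewrite eq_le hq mul_conjC_ge0.
  rewrite mul_conjC_eq0 => /eqP ->.
  rewrite conjC0 !(mul0r, mulr0, add0r, addr0).
  by apply: mulr_ge0 => //; rewrite mulrC; exact: mul_conjC_ge0.
rewrite -(pmulr_rge0 _ pp).
have -> : p * (p * (u^* * u) + s * (v^* * v) + u^* * q * v + v^* * q^* * u) =
   (p * u + q * v) * (p * u + q * v)^* + (p * s - q * q^*) * (v * v^*).
  by rewrite rmorphD !rmorphM /= pr; ring.
by apply: addr_ge0; [exact: mul_conjC_ge0 | apply: mulr_ge0 => //; exact: mul_conjC_ge0].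
Qed.

Lemma qform3 (C : numClosedFieldType) (M : 'M[C]_3) (x : 'cV[C]_3) :
  (adjmx x *m M *m x) 0 0 = \sum_j (\sum_k (x k 0)^* * M k j) * x j 0.
Proof.
rewrite !mxE; apply: eq_bigr => j _; rewrite !mxE; congr (_ * _).
by apply: eq_bigr => k _; rewrite !mxE.
Qed.

Lemma eps_pm (C : numClosedFieldType) i mu : eps C i mu = 1 \/ eps C i mu = -1.
Proof.
case: i => [[|[|[|[|k]]]] hi] //; case: mu => [[|[|[|k']]] hm] //=; by [left|right].
Qed.

Lemma eps_real (C : numClosedFieldType) i mu : eps C i mu \is Num.real.
Proof. by case: (eps_pm C i mu) => ->; rewrite ?realN real1. Qed.

Lemma eps_sq (C : numClosedFieldType) i mu : eps C i mu ^+ 2 = 1.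
Proof. by case: (eps_pm C i mu) => ->; rewrite ?sqrrN expr1n. Qed.

Lemma factor_tr (C : numClosedFieldType) (a : 'I_3 -> C) i : \tr (factor a i) = 1.
Proof.
rewrite /mxtrace sum3 !factorE /gellmann /= !mxE /=.
by field.
Qed.

Lemma factor_herm (C : numClosedFieldType) (a : 'I_3 -> C) i :
  (forall mu, a mu \is Num.real) -> adjmx (factor a i) = factor a i.
Proof.
move=> ar; apply/matrixP => p q; rewrite [LHS]mxE.
have r0 := ar o0; have r1 := ar o1; have r2 := ar o2.
have e0 := eps_real C i o0; have e1 := eps_real C i o1; have e2 := eps_real C i o2.
case: p => [[|[|[|?]]] hp] //; case: q => [[|[|[|?]]] hq] //;
  rewrite !factorE /gellmann /= !mxE /=;
  rewrite !(rmorphD, rmorphM, rmorphN, fmorphV, conjC_nat, conjCi, rmorph0, rmorph1) /=;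
  rewrite ?(conj_Creal r0, conj_Creal r1, conj_Creal r2, conj_Creal e0, conj_Creal e1, conj_Creal e2);
  rewrite ?conjCi; by field.
Qed.


Lemma factor_density (C : numClosedFieldType) (a : 'I_3 -> C) i :
  (forall mu, a mu \is Num.real) -> \sum_(mu < 3) a mu ^+ 2 <= 4%:R / 9%:R ->
  density (factor a i).
Proof.
move=> ar hs; split; last exact: factor_tr.
split; first exact: factor_herm.
move=> x; rewrite qform3 !sum3 !factorE /gellmann /= !mxE /=.
set b0 := eps C i o0 * a o0; set b1 := eps C i o1 * a o1; set b2 := eps C i o2 * a o2.
set u := x o0 0; set v := x o1 0; set w := x o2 0.
have br0 : b0 \is Num.real by rewrite rpredM ?eps_real.
have br1 : b1 \is Num.real by rewrite rpredM ?eps_real.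
have br2 : b2 \is Num.real by rewrite rpredM ?eps_real.
have hsb : b0 ^+ 2 + b1 ^+ 2 + b2 ^+ 2 <= 4%:R / 9%:R.
  by rewrite /b0 /b1 /b2 !exprMn !eps_sq !mul1r; move: hs; rewrite sum3.
have hb2 : b2 ^+ 2 <= (2%:R / 3%:R) ^+ 2.
  rewrite (_ : (2%:R / 3%:R) ^+ 2 = 4%:R / 9%:R :> C); last by field.
  apply: le_trans hsb; rewrite -[X in X <= _]add0r lerD2r.
  by rewrite addr_ge0 // real_exprn_even_ge0.
have [hl hr] : - (2%:R / 3%:R) <= b2 /\ b2 <= 2%:R / 3%:R.
  by apply/andP; apply: sq_le => //; rewrite divr_ge0 ?ler0n.
pose p := 3%:R^-1 + 2%:R^-1 * b2; pose s := 3%:R^-1 - 2%:R^-1 * b2.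
pose q := 2%:R^-1 * (b0 - 'i * b1); pose q' := 2%:R^-1 * (b0 + 'i * b1).
have -> : forall E, E = p * (u^* * u) + s * (v^* * v) + u^* * q * v + v^* * q' * u
   + 3%:R^-1 * (w^* * w) -> (0 <= E) = (0 <= p * (u^* * u) + s * (v^* * v) + u^* * q * v + v^* * q' * u
   + 3%:R^-1 * (w^* * w)) by move=> E ->.
  apply: addr_ge0; last by rewrite mulr_ge0 ?invr_ge0 ?ler0n // mulrC mul_conjC_ge0.
  apply: form2_ge0.
  - rewrite /p (_ : _ + _ = 2%:R^-1 * (b2 - - (2%:R / 3%:R))); last by field.
    by rewrite mulr_ge0 ?invr_ge0 ?ler0n // subr_ge0.
  - rewrite /s (_ : _ - _ = 2%:R^-1 * (2%:R / 3%:R - b2)); last by field.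
    by rewrite mulr_ge0 ?invr_ge0 ?ler0n // subr_ge0.
  - rewrite /q /q' rmorphM fmorphV rmorph_nat rmorphB /= (conj_Creal br0) rmorphM /= (conj_Creal br1).
    by rewrite conjCi mulNr opprK.
  - rewrite -subr_ge0.
    have -> : p * s - q * q' = 4%:R^-1 * (4%:R / 9%:R - (b0 ^+ 2 + b1 ^+ 2 + b2 ^+ 2))
       + 4%:R^-1 * b1 ^+ 2 * ('i ^+ 2 + 1) by rewrite /p /s /q /q'; field.
    by rewrite sqrCi addNr mulr0 addr0 mulr_ge0 ?invr_ge0 ?ler0n // subr_ge0.
rewrite /p /s /q /q'.
ring.
Qed.

Lemma sq3_eq0 (C : numDomainType) (x0 x1 x2 : C) :
  x0 \is Num.real -> x1 \is Num.real -> x2 \is Num.real ->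
  x0 ^+ 2 + x1 ^+ 2 + x2 ^+ 2 <= 0 -> [/\ x0 = 0, x1 = 0 & x2 = 0].
Proof.
move=> r0 r1 r2 h.
have g0 := real_exprn_even_ge0 (n:=2) r0 isT.
have g1 := real_exprn_even_ge0 (n:=2) r1 isT.
have g2 := real_exprn_even_ge0 (n:=2) r2 isT.
have : x0 ^+ 2 + x1 ^+ 2 + x2 ^+ 2 == 0.
  by rewrite eq_le h !addr_ge0.
rewrite !paddr_eq0 ?addr_ge0 // !sqrf_eq0 => /andP [/andP [/eqP -> /eqP ->] /eqP ->].
by [].
Qed.

Lemma cauchy3 (C : numDomainType) (a b x0 x1 x2 y0 y1 y2 s0 s1 s2 : C) :
  0 <= a -> 0 <= b ->
  x0 \is Num.real -> x1 \is Num.real -> x2 \is Num.real ->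
  y0 \is Num.real -> y1 \is Num.real -> y2 \is Num.real ->
  s0 \is Num.real -> s1 \is Num.real -> s2 \is Num.real ->
  s0 ^+ 2 = 1 -> s1 ^+ 2 = 1 -> s2 ^+ 2 = 1 ->
  x0 ^+ 2 + x1 ^+ 2 + x2 ^+ 2 <= a ^+ 2 ->
  y0 ^+ 2 + y1 ^+ 2 + y2 ^+ 2 <= b ^+ 2 ->
  0 <= a * b - (s0 * x0 * y0 + s1 * x1 * y1 + s2 * x2 * y2).
Proof.
move=> a0 b0 rx0 rx1 rx2 ry0 ry1 ry2 rs0 rs1 rs2 e0 e1 e2 hx hy.
move: a0; rewrite le0r => /orP [/eqP az | ap].
  subst a; rewrite expr0n /= in hx.
  by case: (@sq3_eq0 _ _ _ _ rx0 rx1 rx2 hx) => -> -> ->; rewrite !(mul0r, mulr0, addr0, subr0).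
move: b0; rewrite le0r => /orP [/eqP bz | bp].
  subst b; rewrite expr0n /= in hy.
  by case: (@sq3_eq0 _ _ _ _ ry0 ry1 ry2 hy) => -> -> ->; rewrite !(mul0r, mulr0, addr0, subr0).
have abp : 0 < 2%:R * a * b by rewrite !mulr_gt0 ?ltr0n.
rewrite -(pmulr_rge0 _ abp).
have -> : 2%:R * a * b * (a * b - (s0 * x0 * y0 + s1 * x1 * y1 + s2 * x2 * y2)) =
  b ^+ 2 * (a ^+ 2 - (x0 ^+ 2 + x1 ^+ 2 + x2 ^+ 2)) + a ^+ 2 * (b ^+ 2 - (y0 ^+ 2 + y1 ^+ 2 + y2 ^+ 2))
  + ((b * x0 - a * s0 * y0) ^+ 2 + (b * x1 - a * s1 * y1) ^+ 2 + (b * x2 - a * s2 * y2) ^+ 2)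
  - a ^+ 2 * ((s0 ^+ 2 - 1) * y0 ^+ 2 + (s1 ^+ 2 - 1) * y1 ^+ 2 + (s2 ^+ 2 - 1) * y2 ^+ 2).
  ring.
rewrite e0 e1 e2 !subrr !mul0r !addr0 mulr0 subr0.
have rb : b \is Num.real by apply: ger0_real; apply: ltW.
have ra : a \is Num.real by apply: ger0_real; apply: ltW.
apply: addr_ge0; first apply: addr_ge0.
- by apply: mulr_ge0; [exact: real_exprn_even_ge0 | rewrite subr_ge0].
- by apply: mulr_ge0; [exact: real_exprn_even_ge0 | rewrite subr_ge0].
- by rewrite !addr_ge0 // real_exprn_even_ge0 // rpredB ?rpredM.
Qed.

Definition vec2 (C : numClosedFieldType) (u v : C) : 'cV[C]_3 :=
  \col_(k < 3) (if val k == 0%N then u else if val k == 1%N then v else 0).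

Lemma psd_form2 (C : numClosedFieldType) (A : 'M[C]_3) u v : psdmx A ->
  0 <= u^* * A o0 o0 * u + u^* * A o0 o1 * v + v^* * A o1 o0 * u + v^* * A o1 o1 * v.
Proof.
case=> _ /(_ (vec2 C u v)); rewrite qform3 !sum3 !mxE /=.
rewrite !conjC0 !(mul0r, mulr0, addr0, add0r).
set e := (X in 0 <= X) => h; set f := (X in _ <= X).
by have -> : f = e by rewrite /e /f; ring.
Qed.

Lemma psd_facts (C : numClosedFieldType) (A : 'M[C]_3) : psdmx A ->
  [/\ 0 <= A o0 o0, 0 <= A o1 o1, A o1 o0 = (A o0 o1)^* &
      A o0 o1 * A o1 o0 <= A o0 o0 * A o1 o1].
Proof.
move=> hA.
have h00 : 0 <= A o0 o0.
  by have := psd_form2 _ _ 1 0 hA; rewrite conjC0 conjC1 !(mul0r, mulr0, addr0, add0r, mul1r, mulr1).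
have h11 : 0 <= A o1 o1.
  by have := psd_form2 _ _ 0 1 hA; rewrite conjC0 conjC1 !(mul0r, mulr0, addr0, add0r, mul1r, mulr1).
have hc : A o1 o0 = (A o0 o1)^*.
  case: hA => /matrixP /(_ o0 o1) + _; rewrite mxE => <-; by rewrite conjCK.
split => //.
have r00 : (A o0 o0)^* = A o0 o0 by apply: conj_Creal; apply: ger0_real.
have r11 : (A o1 o1)^* = A o1 o1 by apply: conj_Creal; apply: ger0_real.
have F1 := psd_form2 _ _ (A o1 o1) (- A o1 o0) hA.
have F2 := psd_form2 _ _ (- A o0 o1) (A o0 o0) hA.
have F3 := psd_form2 _ _ 1 (- A o1 o0) hA.
move: hc F1 F2 F3 h00 h11 r00 r11.
move: (A o0 o0) (A o1 o1) (A o0 o1) (A o1 o0) => a d w w' -> F1 F2 F3 h00 h11 r00 r11.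
rewrite ?rmorphN /= in F1 F2 F3.
set N := w * w^*.
have hN : 0 <= N by exact: mul_conjC_ge0.
have E1 : d * (a * d - N) = d^* * a * d + d^* * w * - w^* + - w^* ^* * w^* * d + - w^* ^* * d * - w^*.
  by rewrite /N r11 conjCK; ring.
have E2 : a * (a * d - N) = - w^* * a * - w + - w^* * w * a + a^* * w^* * - w + a^* * d * a.
  by rewrite /N r00; ring.
have E3 : a - 2%:R * N + d * N = 1^* * a * 1 + 1^* * w * - w^* + - w^* ^* * w^* * 1 + - w^* ^* * d * - w^*.
  by rewrite /N conjC1 conjCK; ring.
rewrite -E1 in F1; rewrite -E2 in F2; rewrite -E3 in F3.
rewrite -subr_ge0.
rewrite le0r in h11; case/orP: h11 => [/eqP dz | dp]; last by rewrite -(pmulr_rge0 _ dp).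
rewrite le0r in h00; case/orP: h00 => [/eqP az | ap]; last by rewrite -(pmulr_rge0 _ ap).
move: F3; rewrite az dz !mul0r addr0 !sub0r !oppr_ge0 => hN2.
idtac.
by rewrite -(pmulr_rle0 _ (ltr0n _ 2)).
Qed.

Definition k0 : 'I_(3 * 3) := @Ordinal (3 * 3) 0 isT.
Definition k1 : 'I_(3 * 3) := @Ordinal (3 * 3) 1 isT.
Definition k3 : 'I_(3 * 3) := @Ordinal (3 * 3) 3 isT.
Definition k4 : 'I_(3 * 3) := @Ordinal (3 * 3) 4 isT.

Lemma kidx_k0 : kidx1 k0 = o0 /\ kidx2 k0 = o0. Proof. by split; apply: val_inj. Qed.
Lemma kidx_k1 : kidx1 k1 = o0 /\ kidx2 k1 = o1. Proof. by split; apply: val_inj. Qed.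
Lemma kidx_k3 : kidx1 k3 = o1 /\ kidx2 k3 = o0. Proof. by split; apply: val_inj. Qed.
Lemma kidx_k4 : kidx1 k4 = o1 /\ kidx2 k4 = o1. Proof. by split; apply: val_inj. Qed.

Definition Lf (C : numClosedFieldType) (s0 s1 s2 : C) (M : 'M[C]_(3 * 3)) : C :=
  (M k0 k0 + M k1 k1 + M k3 k3 + M k4 k4)
  - s0 * (M k0 k4 + M k1 k3 + M k3 k1 + M k4 k0)
  + s1 * (M k0 k4 - M k1 k3 - M k3 k1 + M k4 k0)
  - s2 * (M k0 k0 - M k1 k1 - M k3 k3 + M k4 k4).
Arguments Lf {C}.
Arguments psd_facts {C A}.

Lemma Lf_kron (C : numClosedFieldType) (s0 s1 s2 : C) (A B : 'M[C]_3) :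
  Lf s0 s1 s2 (kron A B) =
  (A o0 o0 + A o1 o1) * (B o0 o0 + B o1 o1)
  - s0 * (A o0 o1 + A o1 o0) * (B o0 o1 + B o1 o0)
  + s1 * (A o0 o1 - A o1 o0) * (B o0 o1 - B o1 o0)
  - s2 * (A o0 o0 - A o1 o1) * (B o0 o0 - B o1 o1).
Proof.
case: kidx_k0 => a0 b0; case: kidx_k1 => a1 b1; case: kidx_k3 => a3 b3; case: kidx_k4 => a4 b4.
rewrite /Lf !kronE a0 b0 a1 b1 a3 b3 a4 b4; ring.
Qed.

Lemma Lf_kron_ge0 (C : numClosedFieldType) (s0 s1 s2 : C) (A B : 'M[C]_3) :
  s0 \is Num.real -> s1 \is Num.real -> s2 \is Num.real ->
  s0 ^+ 2 = 1 -> s1 ^+ 2 = 1 -> s2 ^+ 2 = 1 ->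
  psdmx A -> psdmx B -> 0 <= Lf s0 s1 s2 (kron A B).
Proof.
move=> rs0 rs1 rs2 e0 e1 e2 hA hB; rewrite Lf_kron.
case: (psd_facts hA) => a00 a11 ac adet.
case: (psd_facts hB) => b00 b11 bc bdet.
move: a00 a11 ac adet; move: (A o0 o0) (A o1 o1) (A o0 o1) (A o1 o0) => p q w w' a00 a11 -> adet.
move: b00 b11 bc bdet; move: (B o0 o0) (B o1 o1) (B o0 o1) (B o1 o0) => p' q' v v' b00 b11 -> bdet.
have -> : (p + q) * (p' + q') - s0 * (w + w^*) * (v + v^*) + s1 * (w - w^*) * (v - v^*)
   - s2 * (p - q) * (p' - q') =
   (p + q) * (p' + q') - (s0 * (w + w^*) * (v + v^*) + s1 * ('i * (w - w^*)) * ('i * (v - v^*))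
   + s2 * (p - q) * (p' - q')) + s1 * (w - w^*) * (v - v^*) * ('i ^+ 2 + 1) by ring.
rewrite sqrCi addNr mulr0 addr0.
have rp : p \is Num.real by exact: ger0_real.
have rq : q \is Num.real by exact: ger0_real.
have rp' : p' \is Num.real by exact: ger0_real.
have rq' : q' \is Num.real by exact: ger0_real.
have realS : forall z : C, z + z^* \is Num.real.
  by move=> z; apply/CrealP; rewrite rmorphD /= conjCK addrC.
have realD : forall z : C, 'i * (z - z^*) \is Num.real.
  move=> z; apply/CrealP; rewrite rmorphM rmorphB /= conjCK conjCi.
  by rewrite mulNr -mulrN opprB.
apply: cauchy3 => //; rewrite ?addr_ge0 ?rpredB //.
- rewrite -subr_ge0.
  have -> : (p + q) ^+ 2 - ((w + w^*) ^+ 2 + ('i * (w - w^*)) ^+ 2 + (p - q) ^+ 2) =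
    4%:R * (p * q - w * w^*) - ('i ^+ 2 + 1) * (w - w^*) ^+ 2 by ring.
  by rewrite sqrCi addNr mul0r subr0 mulr_ge0 ?ler0n // subr_ge0.
- rewrite -subr_ge0.
  have -> : (p' + q') ^+ 2 - ((v + v^*) ^+ 2 + ('i * (v - v^*)) ^+ 2 + (p' - q') ^+ 2) =
    4%:R * (p' * q' - v * v^*) - ('i ^+ 2 + 1) * (v - v^*) ^+ 2 by ring.
  by rewrite sqrCi addNr mul0r subr0 mulr_ge0 ?ler0n // subr_ge0.
Qed.

Lemma Lf_sum (C : numClosedFieldType) (s0 s1 s2 : C) k (p : 'I_k -> C) (K : 'I_k -> 'M[C]_(3 * 3)) :
  Lf s0 s1 s2 (\sum_(i < k) p i *: K i) = \sum_(i < k) p i * Lf s0 s1 s2 (K i).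
Proof.
have L0 : Lf s0 s1 s2 0 = 0 by rewrite /Lf !mxE; ring.
have LD : {morph Lf s0 s1 s2 : A B / A + B >-> A + B} by move=> A B; rewrite /Lf !mxE; ring.
rewrite (big_morph _ LD L0); apply: eq_bigr => i _.
by rewrite /Lf !mxE; ring.
Qed.

Lemma Lf_rho (C : numClosedFieldType) (s0 s1 s2 : C) (t : 'I_3 -> C) :
  Lf s0 s1 s2 (rho1 t) = 4%:R / 9%:R - (s0 * t o0 + s1 * t o1 + s2 * t o2).
Proof.
case: kidx_k0 => a0 b0; case: kidx_k1 => a1 b1; case: kidx_k3 => a3 b3; case: kidx_k4 => a4 b4.
rewrite /Lf /rho1 !mxE !summxE !sum3 ?mxE ?a0 ?b0 ?a1 ?b1 ?a3 ?b3 ?a4 ?b4.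
rewrite /= !(mulr0, mulr1, addr0, add0r, subr0, sub0r, mul0r, mul1r, mulrNN, mulrN, mulNr).
rewrite -expr2 sqrCi.
by field.
Qed.

Lemma sgn_sq (C : numClosedFieldType) (b : bool) : ((-1) ^+ b : C) ^+ 2 = 1.
Proof. by case: b; rewrite ?expr0 ?expr1 ?sqrrN expr1n. Qed.

Lemma sgn_real (C : numClosedFieldType) (b : bool) : ((-1) ^+ b : C) \is Num.real.
Proof. by case: b; rewrite ?expr0 ?expr1 ?realN real1. Qed.

Theorem mainTheorem5 (C : numClosedFieldType) (t : 'I_3 -> C)
  (t_real : forall mu, t mu \is Num.real)
  (rho_state : psdmx (rho1 t)) :
  (separable (rho1 t) <-> \sum_(mu < 3) `|t mu| <= 4%:R / 9%:R) /\
  (\sum_(mu < 3) `|t mu| <= 4%:R / 9%:R ->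
   forall alpha beta : 'I_3 -> C,
     (forall mu, alpha mu \is Num.real) -> (forall mu, beta mu \is Num.real) ->
     (forall mu, alpha mu * beta mu = t mu) ->
     \sum_(mu < 3) alpha mu ^+ 2 <= 4%:R / 9%:R ->
     \sum_(mu < 3) beta mu ^+ 2 <= 4%:R / 9%:R ->
     (forall i, density (factor alpha i) /\ density (factor beta i)) /\
     rho1 t = \sum_(i < 4) (4%:R)^-1 *: kron (factor alpha i) (factor beta i)).
Proof.
have part2 : \sum_(mu < 3) `|t mu| <= 4%:R / 9%:R ->
   forall alpha beta : 'I_3 -> C,
     (forall mu, alpha mu \is Num.real) -> (forall mu, beta mu \is Num.real) ->
     (forall mu, alpha mu * beta mu = t mu) ->
     \sum_(mu < 3) alpha mu ^+ 2 <= 4%:R / 9%:R ->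
     \sum_(mu < 3) beta mu ^+ 2 <= 4%:R / 9%:R ->
     (forall i, density (factor alpha i) /\ density (factor beta i)) /\
     rho1 t = \sum_(i < 4) (4%:R)^-1 *: kron (factor alpha i) (factor beta i).
  move=> _ alpha beta ar br hab ha hb; split; last exact: decomp.
  by move=> i; split; apply: factor_density.
split; last exact: part2.
pose sg mu : C := (-1) ^+ (t mu < 0)%R.
split.
- case=> k [p [A [B [hp [hp1 [hAB hrho]]]]]].
  have hL := Lf_rho C (sg o0) (sg o1) (sg o2) t.
  rewrite hrho Lf_sum in hL.
  have : 0 <= 4%:R / 9%:R - (sg o0 * t o0 + sg o1 * t o1 + sg o2 * t o2).
    rewrite -hL; apply: sumr_ge0 => i _; apply: mulr_ge0 => //.
    apply: Lf_kron_ge0; rewrite /sg ?sgn_real ?sgn_sq //.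
      by case: (hAB i) => [[]].
    by case: (hAB i) => _ [].
  by rewrite subr_ge0 sum3 /sg -!real_normrEsign.
- move=> hs.
  pose alpha mu := sqrtC `|t mu|.
  pose beta mu := sg mu * sqrtC `|t mu|.
  have ar : forall mu, alpha mu \is Num.real by move=> mu; apply: sqrtC_real.
  have br : forall mu, beta mu \is Num.real.
    by move=> mu; rewrite rpredM ?sgn_real //; apply: sqrtC_real.
  have hab : forall mu, alpha mu * beta mu = t mu.
    move=> mu; rewrite /alpha /beta /sg mulrCA -expr2 sqrtCK real_normrEsign //.
    by rewrite mulrA -expr2 sgn_sq mul1r.
  have ha : \sum_(mu < 3) alpha mu ^+ 2 <= 4%:R / 9%:R.
    by under eq_bigr do rewrite /alpha sqrtCK.
  have hb : \sum_(mu < 3) beta mu ^+ 2 <= 4%:R / 9%:R.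
    by under eq_bigr do rewrite /beta exprMn sqrtCK /sg sgn_sq mul1r.
  have [hd he] := part2 hs alpha beta ar br hab ha hb.
  exists 4%N, (fun _ => 4%:R^-1), (factor alpha), (factor beta).
  split; first by move=> _; rewrite invr_ge0 ler0n.
  split; first by rewrite sum4; field.
  by split.
Qed.
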